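(* Let $\mathcal{A}\in\mathbb{R}^{d\times\cdots\times d}$ be an order-$k$ real tensor with the same dimension $d$ in all modes. For every level $1\le\ell\le k$, \[ d^{-(k-\lceil k/\ell\rceil)/2}\|\mathcal{A}\|_F\le\min_{\pi\in\mathcal{P}^\ell_{[k]}}\|\mathrm{Unfold}_\pi(\mathcal{A})\|_\sigma . \]
   Context: $\|\mathcal{A}\|_F$ is the Frobenius norm. For a real tensor $\mathcal{T}\in\mathbb{R}^{e_1\times\cdots\times e_m}$, $\|\mathcal{T}\|_\sigma=\sup\{\sum t_{i_1\dots i_m}x^{(1)}_{i_1}\cdots x^{(m)}_{i_m}:\ \mathbf{x}_n\in\mathbb{R}^{e_n},\ \|\mathbf{x}_n\|_2=1\}$. $\mathcal{P}^\ell_{[k]}$ is the set of partitions of $[k]$ into exactly $\ell$ nonempty blocks. Unfolding: for $\pi=\{B_1,\dots,B_\ell\}$, $\mathrm{Unfold}_\pi(\mathcal{A})$ is the order-$\ell$ tensor of dimensions $(d^{|B_1|},\dots,d^{|B_\ell|})$ whose entry at $(m_1,\dots,m_\ell)$ is $a_{i_1\dots i_k}$, where $m_j$ corresponds to $(i_r)_{r\in B_j}$ under a fixed bijection $[d]^{B_j}\to[d^{|B_j|}]$. *)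

(* Defs.v *)
From HB Require Import structures.
From mathcomp Require Import all_boot all_order all_algebra.
From mathcomp Require Import all_classical all_reals all_analysis.
Set Implicit Arguments. Unset Strict Implicit. Unset Printing Implicit Defensive.
Import Order.TTheory GRing.Theory Num.Theory.
Local Open Scope ring_scope.

Definition tensor (R : realType) (k d : nat) := {ffun 'I_k -> 'I_d} -> R.

Definition frob (R : realType) (k d : nat) (A : tensor R k d) : R :=
  Num.sqrt (\sum_(i : {ffun 'I_k -> 'I_d}) A i ^+ 2).

Definition snorm (R : realType) (J : finType) (e : J -> nat)
  (t : {dffun forall j : J, 'I_(e j)} -> R) : R :=
  sup [set s : R | exists x : forall j : J, 'I_(e j) -> R,
        (forall j, \sum_(i < e j) x j i ^+ 2 = 1) /\
        s = \sum_(m : {dffun forall j : J, 'I_(e j)}) t m * \prod_(j : J) x j (m j)].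

Definition blockT (k d : nat) (B : {set 'I_k}) :=
  {ffun {r : 'I_k | r \in B} -> 'I_d}.

Lemma card_blockT (k d : nat) (B : {set 'I_k}) :
  #|{: blockT d B}| = (d ^ #|B|)%N.
Proof. by rewrite card_ffun card_ord card_sig. Qed.

Definition restr (k d : nat) (B : {set 'I_k}) (i : {ffun 'I_k -> 'I_d}) :
  blockT d B := [ffun s => i (val s)].

Definition enc (k d : nat) (B : {set 'I_k}) (i : {ffun 'I_k -> 'I_d}) :
  'I_(d ^ #|B|) := cast_ord (card_blockT d B) (enum_rank (restr B i)).

Definition blk (k : nat) (P : {set {set 'I_k}}) (j : 'I_#|P|) : {set 'I_k} :=
  enum_val j.

Definition unfold_dims (k d : nat) (P : {set {set 'I_k}}) (j : 'I_#|P|) : nat :=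
  (d ^ #|blk j|)%N.

(* For P a partition of [k] exactly one multi-index i
   matches, so the entry is written as the (one-term) sum below. *)
Definition unfold (R : realType) (k d : nat) (A : tensor R k d)
  (P : {set {set 'I_k}}) : {dffun forall j : 'I_#|P|, 'I_(unfold_dims d j)} -> R :=
  fun m => \sum_(i : {ffun 'I_k -> 'I_d} |
                 [forall j : 'I_#|P|, enc (blk j) i == m j]) A i.
Arguments unfold {R k d} A P _.

(* Main.v *)
Require Import Defs.
From HB Require Import structures.
From mathcomp Require Import all_boot all_order all_algebra.
From mathcomp Require Import all_classical all_reals all_analysis.
From mathcomp Require Import lra.
Import Order.TTheory GRing.Theory Num.Theory.
Local Open Scope ring_scope.

Lemma exists_max (R : realType) (T : finType) (t0 : T) (F : T -> R) :
  exists c, forall c', F c' <= F c.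
Proof.
case: (@arg_maxP _ R T t0 xpredT F erefl) => c _ H.
by exists c => c'; apply: H.
Qed.

Lemma sq_single (R : realType) (T : finType) (p : pred T) (g : T -> R) :
  (forall a b, p a -> p b -> a = b) ->
  (\sum_(t | p t) g t) ^+ 2 = \sum_(t | p t) g t ^+ 2.
Proof.
move=> H; case: (pickP p) => [t0 pt0|p0].
  have E : forall t, p t = (t == t0).
    by move=> t; apply/idP/idP => [pt|/eqP->//]; apply/eqP; apply: H.
  by rewrite !(eq_bigl _ _ E) !big_pred1_eq.
by rewrite !big_pred0 // expr0n.
Qed.

Lemma sum_part (R : realType) (T : finType) (M : finType) (p : pred T)
  (e : T -> M) (g : T -> R) :
  \sum_(m : M) \sum_(i | p i && (e i == m)) g i = \sum_(i | p i) g i.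
Proof. by rewrite (partition_big e xpredT). Qed.

Lemma sum_const_pred (R : realType) (T : finType) (p : pred T) (x:R) :
  \sum_(t | p t) x = x *+ #|p|.
Proof. by rewrite sumr_const. Qed.

Lemma unfold_val (R : realType) (k d : nat) (A : tensor R k d)
  (P : {set {set 'I_k}}) (x : forall j : 'I_#|P|, 'I_(unfold_dims d j) -> R) :
  \sum_(m : {dffun forall j : 'I_#|P|, 'I_(unfold_dims d j)})
     unfold A P m * \prod_(j : 'I_#|P|) x j (m j)
  = \sum_(i : {ffun 'I_k -> 'I_d}) A i * \prod_(j : 'I_#|P|) x j (enc (blk j) i).
Proof.
pose m0 (i : {ffun 'I_k -> 'I_d}) : {dffun forall j : 'I_#|P|, 'I_(unfold_dims d j)} :=
  [ffun j => enc (blk j) i].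
rewrite (partition_big m0 xpredT) //=.
apply: eq_bigr => m _; rewrite /unfold big_distrl /=.
have E : forall i, [forall j, enc (blk j) i == m j] = (m0 i == m).
  move=> i; apply/idP/idP => [/forallP H|/eqP <-]; last first.
    by apply/forallP => j; rewrite /m0 ffunE; apply/eqP.
  by apply/eqP/ffunP => j; rewrite /m0 ffunE; apply/eqP/H.
rewrite (eq_bigl _ _ E); apply: eq_bigr => i /eqP <-.
by congr (_ * _); apply: eq_bigr => j _; rewrite /m0 ffunE.
Qed.

Theorem corollary4p14 (R : realType) (k d l : nat) (A : tensor R k d) :
  (1 <= l <= k)%N ->
  forall P : {set {set 'I_k}},
    finset.partition P [set: 'I_k] -> #|P| = l ->
    (d%:R : R) `^ (- ((k%:R - (Num.ceil (k%:R / l%:R : R))%:~R) / 2))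
      * frob A <= snorm (unfold A P).
Proof.
move=> /andP [l1 lk] P Ppart cardP.
have /and3P [/eqP Pcov Ptriv P0] := Ppart.
have L0 : (0 < #|P|)%N by rewrite cardP.
have blkP : forall j : 'I_#|P|, blk j \in P by move=> j; apply: enum_valP.
have blk_gt0 : forall j : 'I_#|P|, (0 < #|blk j|)%N.
  move=> j; rewrite card_gt0; apply: contraNneq P0 => <-; exact: blkP.
have blk_disj : forall j j' : 'I_#|P|, j != j' -> [disjoint blk j & blk j'].
  move=> j j' njj; move/finset.trivIsetP: Ptriv; apply; rewrite ?blkP //.
  by apply: contra njj => /eqP /enum_val_inj ->.
have cov : forall r : 'I_k, exists j : 'I_#|P|, r \in blk j.
  move=> r; have : r \in finset.cover P by rewrite Pcov inE.
  case/finset.bigcupP => B BP rB.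
  by exists (enum_rank_in BP B); rewrite /blk enum_rankK_in.
case: d A => [|d'] A.
  have k0 : (0 < k)%N by apply: leq_trans lk.
  have -> : frob A = 0.
    by rewrite /frob big1 ?sqrtr0 // => i _; case: (i (Ordinal k0)).
  rewrite mulr0 /snorm; set S := (X in sup X).
  suff -> : S = set0 by rewrite sup0.
  apply/seteqP; split => // s [x [Hx _]].
  have := Hx (Ordinal L0); rewrite big1 => [|i _].
    by move/esym/eqP; rewrite oner_eq0.
  have := ltn_ord i; move: (val i) => n.
  by rewrite /unfold_dims exp0n.
have [j0 Hj0] : exists j0 : 'I_#|P|, forall j : 'I_#|P|, (#|blk j| <= #|blk j0|)%N.
  have [j0 H] := @exists_max R _ (Ordinal L0) (fun j : 'I_#|P| => (#|blk j|%:R : R)).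
  by exists j0 => j; have := H j; rewrite ler_nat.
set B0 := blk j0.
have B0k : (#|B0| <= k)%N.
  by rewrite -[X in (_ <= X)%N](card_ord k); apply: max_card.
have kB : (k <= l * #|B0|)%N.
  rewrite -[X in (X <= _)%N](card_ord k) -cardsT (card_partition Ppart) big_enum_val -cardP.
  apply: (@leq_trans (\sum_(j < #|P|) #|B0|)%N); last first.
    by rewrite sum_nat_const card_ord.
  by apply: leq_sum => j _; exact: Hj0.
have hq : (Num.ceil (k%:R / l%:R : R))%:~R <= (#|B0|%:R : R).
  have : Num.ceil (k%:R / l%:R : R) <= #|B0|%:Z.
    rewrite ceil_le_int /= ler_pdivrMr ?ltr0n // -natrM ler_nat.
    by rewrite mulnC.
  by rewrite -(ler_int R).
set a := (d'.+1%:R : R) `^ _.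
have a0 : 0 <= a by apply: powR_ge0.
have a2 : a ^+ 2 <= ((d'.+1%:R : R) ^+ (k - #|B0|))^-1.
  rewrite /a -powR_mulrn ?powR_ge0 // -powRrM.
  rewrite -powR_mulrn // -powRN.
  apply: ler_powR; first by rewrite ler1n.
  rewrite natrB //; lra.
pose S (c i : {ffun 'I_k -> 'I_d'.+1}) :=
  [forall j : 'I_#|P|, (j != j0) ==> (enc (blk j) i == enc (blk j) c)].
pose T (c : {ffun 'I_k -> 'I_d'.+1}) := \sum_(i | S c i) A i ^+ 2.
have [c Hc] := @exists_max R _ [ffun _ => ord0] T.
pose F := \sum_i A i ^+ 2.
have T0 : forall c, 0 <= T c by move=> c'; apply: sumr_ge0 => i _; exact: sqr_ge0.
have cnt : forall i, (d'.+1 ^ #|B0| <= #|[pred c | S c i]|)%N.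
  move=> i.
  pose h (g : blockT d'.+1 B0) : {ffun 'I_k -> 'I_d'.+1} :=
    [ffun r => if (insub r : option {r : 'I_k | r \in B0}) is Some s then g s else i r].
  have hinj : injective h.
    move=> g1 g2 E; apply/ffunP => s.
    have := congr1 (fun f : {ffun 'I_k -> 'I_d'.+1} => f (val s)) E; rewrite /h !ffunE /=.
    by rewrite valK.
  rewrite -(card_blockT d'.+1 B0) -(card_imset _ hinj).
  apply: subset_leq_card; apply/fintype.subsetP => c0 /imsetP [g _ ->].
  rewrite inE /S; apply/forallP => j; apply/implyP => nj.
  apply/eqP; rewrite /enc; congr (cast_ord _ (enum_rank _)).
  apply/ffunP => s; rewrite /restr !ffunE insubF //.
  exact: (disjointFr (blk_disj j j0 nj) (valP s)).
have FT : F <= T c * (d'.+1%:R : R) ^+ (k - #|B0|).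
  have H1 : F *+ (d'.+1 ^ #|B0|) <= \sum_c' T c'.
    rewrite /T (exchange_big_dep xpredT) //= /F -sumrMnl.
    apply: ler_sum => i _.
    rewrite sum_const_pred -mulr_natr -[X in _ <= X]mulr_natr.
    apply: ler_wpM2l; first exact: sqr_ge0.
    rewrite ler_nat; exact: cnt.
  have H2 : \sum_c' T c' <= T c *+ (d'.+1 ^ k).
    apply: (le_trans (ler_sum _ (fun c' _ => Hc c'))).
    by rewrite sumr_const card_ffun !card_ord.
  have Ek : (d'.+1 ^ k = d'.+1 ^ #|B0| * d'.+1 ^ (k - #|B0|))%N.
    by rewrite -expnD subnKC.
  have := le_trans H1 H2.
  rewrite Ek -mulr_natr -[X in _ <= X]mulr_natr natrM mulrA.
  rewrite [X in _ <= X]mulrAC.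
  by rewrite !natrX ler_pM2r ?exprn_gt0 ?ltr0n.
have inj : forall i i', S c i -> S c i' ->
    enc (blk j0) i = enc (blk j0) i' -> i = i'.
  move=> i i' Si Si' e0.
  have Hall : forall j : 'I_#|P|, enc (blk j) i = enc (blk j) i'.
    move=> j; case: (eqVneq j j0) => [->//|nj].
    move/forallP: Si => /(_ j); rewrite nj /= => /eqP ->.
    by move/forallP: Si' => /(_ j); rewrite nj /= => /eqP ->.
  apply/ffunP => r; have [j rj] := cov r.
  move: (Hall j) => /cast_ord_inj /enum_rank_inj /ffunP /(_ (exist _ r rj)).
  by rewrite !ffunE.
pose Tc := T c.
pose f (j : 'I_#|P|) (m : 'I_(unfold_dims d'.+1 j)) :=
  \sum_(i | S c i && (enc (blk j) i == m)) A i.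
pose x (j : 'I_#|P|) (m : 'I_(unfold_dims d'.+1 j)) : R :=
  if j == j0 then (if Tc == 0 then (val m == 0%N)%:R else f j m / Num.sqrt Tc)
  else (m == enc (blk j) c)%:R.
have Tc0 : 0 <= Tc by apply: T0.
have xn : forall j : 'I_#|P|, \sum_(i < unfold_dims d'.+1 j) x j i ^+ 2 = 1.
  move=> j; case: (eqVneq j j0) => [->|nj]; last first.
    rewrite (bigD1 (enc (blk j) c)) //= /x (negbTE nj) eqxx expr1n big1 ?addr0 //.
    by move=> m /negbTE ->; rewrite expr0n.
  rewrite /x eqxx; have [T00|nT] := eqVneq Tc 0.
    have o0 : (0 < unfold_dims d'.+1 j0)%N by rewrite /unfold_dims expn_gt0.
    rewrite (bigD1 (Ordinal o0)) //= expr1n big1 ?addr0 // => m nm.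
    rewrite (_ : (val m == 0%N) = false) ?expr0n //.
    by apply: contraNF nm => /eqP h; apply/eqP/val_inj.
  under eq_bigr do rewrite expr_div_n sqr_sqrtr //.
  rewrite -mulr_suml.
  rewrite (eq_bigr (fun m => \sum_(i | S c i && (enc (blk j0) i == m)) A i ^+ 2)).
    by rewrite (@sum_part R _ _ (S c) (enc (blk j0))) divff.
  move=> m _; rewrite /f sq_single // => u v /andP[Sa /eqP ea] /andP[Sb /eqP eb].
  by apply: inj; rewrite ?ea ?eb.
have Hval : \sum_(m : {dffun forall j : 'I_#|P|, 'I_(unfold_dims d'.+1 j)})
     unfold A P m * \prod_(j : 'I_#|P|) x j (m j) = Num.sqrt Tc.
  rewrite unfold_val.
  have E : forall i, \prod_(j < #|P|) x j (enc (blk j) i)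
                     = x j0 (enc (blk j0) i) * (S c i)%:R.
    move=> i; rewrite (bigD1 j0) //=; congr (_ * _).
    case Sci: (S c i).
      apply: big1 => j nj; rewrite /x (negbTE nj).
      by move/forallP: Sci => /(_ j); rewrite nj /= => ->.
    move/negbT/forallPn: Sci => [j]; rewrite negb_imply => /andP [nj ne].
    by rewrite (bigD1 j) //= /x (negbTE nj) (negbTE ne) mul0r.
  under eq_bigr do rewrite E.
  rewrite (eq_bigr (fun i => if S c i then A i * x j0 (enc (blk j0) i) else 0));
    last by move=> i _; case: (S c i); rewrite ?mulr1 ?mulr0.
  rewrite -big_mkcond /= /x eqxx.
  have [T00|nT] := eqVneq Tc 0.
    rewrite T00 sqrtr0 big1 // => i Si.
    have : A i ^+ 2 = 0 := psumr_eq0P (fun i _ => sqr_ge0 (A i)) T00 Si.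
    by move/eqP; rewrite sqrf_eq0 => /eqP ->; rewrite mul0r.
  rewrite (eq_bigr (fun i => A i ^+ 2 / Num.sqrt Tc)); last first.
    move=> i Si; rewrite /f (eq_bigl (fun i' => i' == i)) ?big_pred1_eq.
      by rewrite mulrA expr2.
    move=> i'; apply/andP/eqP => [[Si' /eqP e]|->]; last by split.
    exact: inj.
  rewrite -mulr_suml.
  have -> : \sum_(i | S c i) A i ^+ 2 = Tc by [].
  have sT : Num.sqrt Tc != 0.
    by rewrite sqrtr_eq0 -ltNge lt_neqAle eq_sym nT Tc0.
  by rewrite -{1}(sqr_sqrtr Tc0) expr2 mulfK.
apply: (@le_trans _ _ (Num.sqrt Tc)).
  rewrite /frob -[a]ger0_norm // -sqrtr_sqr -sqrtrM ?sqr_ge0 // ler_sqrt //.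
  have F0 : 0 <= F by apply: sumr_ge0 => i _; exact: sqr_ge0.
  apply: (le_trans (ler_wpM2r F0 a2)).
  by rewrite ler_pdivrMl ?exprn_gt0 ?ltr0n // mulrC.
rewrite /snorm; set SS := (X in sup X).
have hub : has_ubound SS.
  exists (\sum_m `|unfold A P m|) => s [y [Hy ->]].
  apply: (le_trans (ler_norm _)); apply: (le_trans (ler_norm_sum _ _ _)).
  apply: ler_sum => m _; rewrite normrM normr_prod.
  rewrite -[X in _ <= X]mulr1 ler_wpM2l //.
  apply: prodr_ile1 => j _; rewrite normr_ge0 /=.
  have := Hy j; rewrite (bigD1 (m j)) //= => H1.
  have : y j (m j) ^+ 2 <= 1.
    by rewrite -H1 lerDl; apply: sumr_ge0 => *; exact: sqr_ge0.
  by rewrite -(real_normK (num_real (y j (m j)))) expr_le1.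
apply: (ub_le_sup hub); exists x; split; first exact: xn.
by rewrite Hval.
Qed.
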